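(* Let $M$ be a complete pointed metric space and $Y$ an infinite-dimensional real Banach space. Then there exists a complete pointed metric space $M'$ such that (i) $\mathrm{A}(M',Y)\subsetneqq\mathrm{Lip}_0(M',Y)$; (ii) $M'\setminus M$ is countable; (iii) $M\subseteq M'$ and the metric of $M'$ restricted to $M$ is the metric of $M$.
   Context: Throughout, metric spaces are complete and pointed, with base point $0$. $\mathrm{Lip}_0(M,Y)$ is the Banach space of Lipschitz maps $f:M\to Y$ with $f(0)=0$, normed by $\|f\|=\sup_{p\neq q}\|f(p)-f(q)\|/d(p,q)$. A map $f$ attains its norm toward $y\in Y$ if there is a sequence $(p_n,q_n)$ in $M\times M$ with $p_n\neq q_n$ such that $[f(p_n)-f(q_n)]/d(p_n,q_n)\to y$ and $\|y\|=\|f\|$; $\mathrm{A}(M,Y)$ is the set of $f$ attaining their norm toward some vector. *)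

(* Defs.v *)
From HB Require Import structures.
From mathcomp Require Import all_boot all_order all_algebra.
From mathcomp Require Import all_classical all_reals all_analysis.
Set Implicit Arguments. Unset Strict Implicit. Unset Printing Implicit Defensive.
Import Order.TTheory GRing.Theory Num.Theory.
Import numFieldNormedType.Exports.
Local Open Scope classical_set_scope.
Local Open Scope ring_scope.

Section Defs.
Variable R : realType.

Definition is_metric (T : Type) (d : T -> T -> R) : Prop :=
  (forall x y, 0 <= d x y) /\ (forall x y, d x y = 0 <-> x = y) /\
  (forall x y, d x y = d y x) /\ (forall x y z, d x z <= d x y + d y z).

Definition complete_metric (T : Type) (d : T -> T -> R) : Prop :=
  forall u : nat -> T,
    (forall e, 0 < e -> exists N, forall m n, (N <= m)%N -> (N <= n)%N -> d (u m) (u n) < e) ->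
    exists x, forall e, 0 < e -> exists N, forall n, (N <= n)%N -> d (u n) x < e.

Definition infinite_dimensional (Y : normedModType R) : Prop :=
  forall s : seq Y, exists y : Y,
    forall c : nat -> R, y <> \sum_(i < size s) c i *: s`_i.

Variables (T : Type) (d : T -> T -> R) (x0 : T) (Y : normedModType R).

Definition lip_ratios (f : T -> Y) : set R :=
  [set r | exists p q, p <> q /\ r = `|f p - f q| / d p q].

Definition Lip0 : set (T -> Y) :=
  [set f | f x0 = 0 /\ has_ubound (lip_ratios f)].

Definition lipnorm (f : T -> Y) : R := sup (lip_ratios f).

Definition attains_norm_toward (f : T -> Y) (y : Y) : Prop :=
  exists p q : nat -> T, (forall n, p n <> q n) /\
    ((fun n => (d (p n) (q n))^-1 *: (f (p n) - f (q n))) @ \oo --> y) /\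
    `|y| = lipnorm f.

Definition NA : set (T -> Y) :=
  [set f | Lip0 f /\ exists y, attains_norm_toward f y].

End Defs.

(* Main.v *)
Require Import Defs.
From HB Require Import structures.
From mathcomp Require Import all_boot all_order all_algebra.
From mathcomp Require Import all_classical all_reals all_analysis.
From mathcomp Require Import ring lra zify.
Import Order.TTheory GRing.Theory Num.Theory.
Import numFieldNormedType.Exports.
Local Open Scope classical_set_scope.
Local Open Scope ring_scope.
Set Implicit Arguments. Unset Strict Implicit.

Lemma near_oo_ex (P : nat -> Prop) : (\forall n \near \oo, P n) -> exists N, forall n, (N <= n)%N -> P n.
Proof. by case=> N _ HN; exists N => n Hn; apply: HN. Qed.

Lemma ex_near_oo (P : nat -> Prop) N : (forall n, (N <= n)%N -> P n) -> (\forall n \near \oo, P n).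
Proof. by move=> H; exists N. Qed.

Lemma real_cauchy (R : realType) (t : nat -> R) :
  (forall e, 0 < e -> exists N, forall m n, (N <= m)%N -> (N <= n)%N -> `|t m - t n| < e) ->
  exists l, forall e, 0 < e -> exists N, forall n, (N <= n)%N -> `|l - t n| < e.
Proof.
move=> H.
have : cvg (t @ \oo).
  apply/cauchy_cvgP/cauchy_exP => e e0.
  have [N HN] := H e e0; exists (t N); apply: (@ex_near_oo _ N) => n Hn.
  rewrite /ball /=. exact: HN.
move=> /cvgrPdist_lt Hc; exists (lim (t @ \oo)) => e e0.
exact: near_oo_ex (Hc e e0).
Qed.

Section Span.
Variables (R : realType) (Y : normedModType R).

Definition spanS (s : seq Y) (y : Y) :=
  exists c : nat -> R, y = \sum_(i < size s) c i *: s`_i.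

Lemma spanS0 s : spanS s 0.
Proof. by exists (fun _ => 0); rewrite big1 // => i _; rewrite scale0r. Qed.

Lemma spanSD s a b : spanS s a -> spanS s b -> spanS s (a + b).
Proof.
move=> [c1 ->] [c2 ->]; exists (fun i => c1 i + c2 i).
by rewrite -big_split /=; apply: eq_bigr => i _; rewrite scalerDl.
Qed.

Lemma spanSZ s k a : spanS s a -> spanS s (k *: a).
Proof.
move=> [c ->]; exists (fun i => k * c i).
by rewrite scaler_sumr; apply: eq_bigr => i _; rewrite scalerA.
Qed.

Lemma spanSN s a : spanS s a -> spanS s (- a).
Proof. by move=> H; rewrite -scaleN1r; apply: spanSZ. Qed.

Lemma spanSB s a b : spanS s a -> spanS s b -> spanS s (a - b).
Proof. by move=> Ha Hb; apply: spanSD => //; apply: spanSN. Qed.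

Lemma spanS_nil y : spanS [::] y <-> y = 0.
Proof.
split; first by move=> [c ->]; rewrite big_ord0.
by move=> ->; apply: spanS0.
Qed.

Lemma spanS_rcons s v y :
  spanS (rcons s v) y <-> exists w t, spanS s w /\ y = w + t *: v.
Proof.
split.
  move=> [c ->]; exists (\sum_(i < size s) c i *: s`_i), (c (size s)); split.
    by exists c.
  rewrite size_rcons big_ord_recr /= nth_rcons ltnn eqxx; congr (_ + _).
  by apply: eq_bigr => i _; rewrite nth_rcons ltn_ord.
move=> [w [t [[c ->] ->]]].
exists (fun i => if (i < size s)%N then c i else t).
rewrite size_rcons big_ord_recr /= nth_rcons ltnn eqxx; congr (_ + _).
by apply: eq_bigr => i _; rewrite nth_rcons ltn_ord.
Qed.

Lemma spanS_sub_rcons s v y : spanS s y -> spanS (rcons s v) y.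
Proof. by move=> H; apply/spanS_rcons; exists y, 0; rewrite scale0r addr0. Qed.

Lemma spanS_mem_rcons s v : spanS (rcons s v) v.
Proof. by apply/spanS_rcons; exists 0, 1; rewrite scale1r add0r; split => //; apply: spanS0. Qed.

Definition closedS (s : seq Y) := forall y,
  (forall e, 0 < e -> exists g, spanS s g /\ `|y - g| < e) -> spanS s y.

Lemma dist_pos s v : closedS s -> ~ spanS s v ->
  exists del, 0 < del /\ forall g, spanS s g -> del <= `|v - g|.
Proof.
move=> Hs Hv; apply: contrapT => Hno; apply: Hv; apply: Hs => e e0.
apply: contrapT => Hn; apply: Hno; exists e; split=> // g Hg.
rewrite leNgt; apply/negP => Hlt; by apply: Hn; exists g.
Qed.

Lemma key_ineq s v del : 0 < del -> (forall g, spanS s g -> del <= `|v - g|) ->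
  forall w t, spanS s w -> `|t| * del <= `|w + t *: v|.
Proof.
move=> del0 Hdel w t Hw.
have [->|t0] := eqVneq t 0; first by rewrite normr0 mul0r.
have -> : w + t *: v = t *: (v - (- t^-1 *: w)).
  by rewrite scaleNr opprK scalerDr scalerA mulfV // scale1r addrC.
rewrite normrZ; apply: ler_wpM2l => //; apply: Hdel; exact: spanSZ.
Qed.
Lemma inv_small x : 0 < x -> exists N, forall n, (N <= n)%N -> n.+1%:R^-1 < x :> R.
Proof.
move=> x0; have [k Hk] := ltr_add_invr x0; rewrite add0r in Hk.
exists k => n Hn; apply: le_lt_trans Hk.
by rewrite lef_pV2 ?posrE ?ltr0Sn // ler_nat ltnS.
Qed.

Lemma closedS_rcons s v : closedS s -> closedS (rcons s v).
Proof.
move=> Hs y Hy.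
case: (pselect (spanS s v)) => Hv.
  have sub : forall g, spanS (rcons s v) g -> spanS s g.
    move=> g /spanS_rcons [w [t [Hw ->]]]; apply: spanSD => //; exact: spanSZ.
  apply: spanS_sub_rcons; apply: Hs => e e0.
  have [g [Hg He]] := Hy e e0; exists g; split=> //; exact: sub.
have [del [del0 Hdel]] := @dist_pos s v Hs Hv.
have key := @key_ineq s v del del0 Hdel.
have : forall n : nat, exists p : Y * R,
    spanS s p.1 /\ `|y - (p.1 + p.2 *: v)| < n.+1%:R^-1.
  move=> n; have Hp : 0 < n.+1%:R^-1 :> R by rewrite invr_gt0 ltr0Sn.
  have [g [/spanS_rcons [w [t [Hw ->]]] Hg]] := Hy _ Hp.
  by exists (w, t).
move=> /choice [f Hf].
pose t := fun n => (f n).2; pose w := fun n => (f n).1.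
have Hc : forall e, 0 < e -> exists N, forall m n, (N <= m)%N -> (N <= n)%N ->
    `|t m - t n| < e.
  move=> e e0.
  have [N HN] := inv_small (divr_gt0 (mulr_gt0 e0 del0) (ltr0Sn R 1)).
  exists N => m n Hm Hn.
  have := key (w m - w n) (t m - t n) (spanSB (Hf m).1 (Hf n).1).
  have -> : w m - w n + (t m - t n) *: v =
     (y - (w n + t n *: v)) - (y - (w m + t m *: v)).
    by rewrite [in RHS]opprB [in RHS]addrC [in RHS]addrA subrK opprD addrACA scalerBl.
  move=> H1.
  have H2 := ler_normB (y - (w n + t n *: v)) (y - (w m + t m *: v)).
  have H3 := (Hf n).2; have H4 := (Hf m).2; have H5 := HN _ Hm; have H6 := HN _ Hn.
  rewrite -/(w n) -/(t n) -/(w m) -/(t m) in H3 H4.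
  have H7 : `|t m - t n| * del < e * del.
    have H8 := ltrD (lt_trans H3 H6) (lt_trans H4 H5).
    rewrite -splitr in H8.
    exact: le_lt_trans H1 (le_lt_trans H2 H8).
  by rewrite ltr_pM2r in H7.
have [tl Htl] := real_cauchy Hc.
have Hw : spanS s (y - tl *: v).
  apply: Hs => e e0.
  have e20 : 0 < e / 2 by rewrite divr_gt0.
  have [N1 HN1] := inv_small e20.
  have v10 : 0 < `|v| + 1 by rewrite ltr_wpDl.
  have [N2 HN2] := Htl _ (divr_gt0 e20 v10).
  pose n := maxn N1 N2.
  exists (w n); split; first exact: (Hf n).1.
  have -> : y - tl *: v - w n = (y - (w n + t n *: v)) + (t n - tl) *: v.
    by rewrite scalerBl opprD !addrA subrK addrAC.
  have Ha : `|y - (w n + t n *: v)| < e / 2.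
    exact: lt_trans (Hf n).2 (HN1 _ (leq_maxl _ _)).
  have Hb : `|(t n - tl) *: v| < e / 2.
    have H := HN2 _ (leq_maxr N1 N2); rewrite ltr_pdivlMr // in H.
    rewrite normrZ distrC; apply: le_lt_trans H.
    by apply: ler_wpM2l => //; rewrite lerDl.
  apply: le_lt_trans (ler_normD _ _) _; rewrite (splitr e); exact: ltrD Ha Hb.
apply/spanS_rcons; exists (y - tl *: v), tl; split => //; by rewrite subrK.
Qed.

Lemma closedS_all s : closedS s.
Proof.
elim/last_ind: s => [|s v IH]; last exact: closedS_rcons.
move=> y Hy; apply/spanS_nil; case: (eqVneq y 0) => // Hy0.
have Hn : 0 < `|y| by rewrite normr_gt0.
have [g [/spanS_nil -> Hg]] := Hy _ Hn.
by rewrite subr0 ltxx in Hg.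
Qed.

Lemma riesz_step s (y : Y) : ~ spanS s y ->
  exists e : Y, `|e| = 1 /\ forall g, spanS s g -> 1/2 <= `|e - g|.
Proof.
move=> Hy.
have [del [del0 Hdel]] := @dist_pos s y (@closedS_all s) Hy.
pose A := [set r : R | forall g, spanS s g -> r <= `|y - g|].
have Adel : A del by [].
have Aub : has_ubound A.
  by exists `|y - 0| => r Ar; apply: Ar; apply: spanS0.
have dle : del <= sup A by apply: ub_le_sup.
have ds0 : 0 < sup A by apply: lt_le_trans dle.
have HdA : forall g, spanS s g -> sup A <= `|y - g|.
  by move=> g Hg; apply: ge_sup; [exists del | move=> r Ar; apply: Ar].
have [w [Hw Hwlt]] : exists w, spanS s w /\ `|y - w| < 2 * sup A.
  apply: contrapT => Hno.
  have A2 : A (2 * sup A).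
    move=> g Hg; rewrite leNgt; apply/negP => Hlt; apply: Hno; by exists g.
  have H := ub_le_sup Aub A2.
  set S := sup A in H ds0; lra.
pose r := `|y - w|.
have r0 : 0 < r by apply: lt_le_trans ds0 (HdA _ Hw).
exists (r^-1 *: (y - w)); split.
  by rewrite normrZ normfV normr_id mulVf // gt_eqF.
move=> g Hg.
have -> : r^-1 *: (y - w) - g = r^-1 *: (y - (w + r *: g)).
  by rewrite [in RHS]opprD [in RHS]addrA [in RHS]scalerBr scalerA mulVf ?gt_eqF // scale1r.
rewrite normrZ normfV (ger0_norm (ltW r0)) mulrC.
apply: (@le_trans _ _ (sup A / r)).

  rewrite ler_pdivlMr //. set S := sup A in Hwlt ds0 *; rewrite -/r in Hwlt; lra.
rewrite [X in _ <= X]mulrC ler_pM2r ?invr_gt0 //.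
apply: HdA; apply: spanSD => //; exact: spanSZ.
Qed.
End Span.

Lemma riesz_seq (R : realType) (Y : normedModType R) : infinite_dimensional Y ->
  exists (h : nat -> Y) (H : nat -> seq Y),
    (forall n, `|h n| = 1) /\
    (forall n g, spanS (H n) g -> 1/2 <= `|h n - g|) /\
    (forall n, spanS (H n.+1) (h n)) /\
    (forall m n g, (m <= n)%N -> spanS (H m) g -> spanS (H n) g).
Proof.
move=> hY.
have : forall s : seq Y, exists e : Y,
    `|e| = 1 /\ forall g, spanS s g -> 1/2 <= `|e - g|.
  move=> s; have [y Hy] := hY s; apply: (@riesz_step _ _ s y).
  by move=> [c Hc]; exact: Hy c Hc.
move=> /choice [G HG].
pose H := fix H n := if n is n'.+1 then rcons (H n') (G (H n')) else [::].
exists (fun n => G (H n)), H; split; first by move=> n; case: (HG (H n)).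
split; first by move=> n; case: (HG (H n)).
split; first by move=> n; exact: spanS_mem_rcons.
move=> m n g; elim: n => [|n IH] Hmn Hg.
  by move: Hmn; rewrite leqn0 => /eqP <-.
rewrite leq_eqVlt in Hmn; case/orP: Hmn => [/eqP <-|Hlt] //.
by apply: spanS_sub_rcons; apply: IH.
Qed.

Lemma two_lt_one (R : realType) : (2 : R) < 1 -> False.
Proof. lra. Qed.

Section Main.
Variables (R : realType) (T : Type) (d : T -> T -> R) (x0 : T).
Hypothesis hd : is_metric d.

Definition dd (p q : T + nat) : R :=
  match p, q with
  | inl x, inl y => d x y
  | inl x, inr _ => 1 + d x0 x
  | inr _, inl y => 1 + d x0 y
  | inr n, inr m => if n == m then 0 else 2
  end.

Lemma dd_metric : is_metric dd.
Proof.
case: hd => [h0 [h1 [h2 h3]]].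
have hx : forall x, d x0 x <= d x0 x0 + d x0 x by move=> x; rewrite (proj2 (h1 x0 x0) erefl) add0r.
split.
  case=> [x|n] [y|m] //=; rewrite ?addr_ge0 //; by case: eqP.
split.
  case=> [x|n] [y|m] /=.
  - by split => [/h1 ->|[] /h1].
  - split => [H|H]; [exfalso; have := h0 x0 x; lra | discriminate].
  - split => [H|H]; [exfalso; have := h0 x0 y; lra | discriminate].
  - case: eqVneq => [->|ne]; split => // H; first (exfalso; lra).
    by case: H => E; rewrite E eqxx in ne.
split.
  case=> [x|n] [y|m] //=; try exact: h2.
  by rewrite eq_sym.
case=> [x|n] [y|m] [z|k] /=.
- exact: h3.
- have := h3 x0 y x; rewrite (h2 y x); lra.
- have := h3 x x0 z; rewrite (h2 x x0); have := h0 x0 x; have := h0 x0 z; lra.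
- case: eqP => _; have := h0 x0 x; lra.
- have := h3 x0 y z; lra.
- case: eqP => _; have := h0 x0 y; lra.
- case: eqP => _; have := h0 x0 z; lra.
- case: (eqVneq n k) => [->|nk]; first by case: eqP; case: eqP => //; lra.
  case: (eqVneq n m) => [<-|nm]; first by rewrite (negbTE nk); lra.
  case: eqP => _; lra.
Qed.

Lemma dd_complete : complete_metric d -> complete_metric dd.
Proof.
case: hd => [h0 [h1 [h2 h3]]].
move=> hc u Hu.
have [N HN] := Hu 1 ltr01.
case E: (u N) => [x|k].
- have Hl : forall n, (N <= n)%N -> exists y, u n = inl y.
    move=> n Hn; have := HN N n (leqnn N) Hn; rewrite E.
    case: (u n) => [y|m] /=; first by exists y.
    move=> H; exfalso; have := h0 x0 x; lra.
  pose v n := match u (n + N)%N with inl y => y | inr _ => x0 end.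
  have Hv : forall n, u (n + N)%N = inl (v n).
    move=> n; have [y Hy] := Hl (n + N)%N (leq_addl _ _); by rewrite /v Hy.
  have Hcv : forall e, 0 < e -> exists N, forall m n, (N <= m)%N -> (N <= n)%N -> d (v m) (v n) < e.
    move=> e e0; have [M HM] := Hu e e0; exists M => m n Hm Hn.
    have := HM (m + N)%N (n + N)%N ltac:(lia) ltac:(lia); by rewrite !Hv.
  have [z Hz] := hc v Hcv.
  exists (inl z) => e e0; have [M HM] := Hz e e0; exists (M + N)%N => n Hn.
  have := Hv (n - N)%N; rewrite subnK; last by lia.
  move=> ->; apply: HM; lia.
- have Hk : forall n, (N <= n)%N -> u n = inr k.
    move=> n Hn; have := HN N n (leqnn N) Hn; rewrite E.
    case: (u n) => [y|m] /=.
      move=> H; exfalso; have := h0 x0 y; lra.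
    case: eqP => [->//|_] /two_lt_one [].
  exists (inr k) => e e0; exists N => n Hn; by rewrite Hk //= eqxx.
Qed.
End Main.

Lemma num1 (R : realType) (a D : R) : 0 <= a -> 0 <= D -> a / (1 + D) <= a.
Proof.
move=> a0 D0; rewrite ler_pdivrMr; last by lra.
nra.
Qed.

Lemma num2 (R : realType) (x a b c : R) : x <= a + b -> a <= c -> b <= c -> x / 2 <= c.
Proof. move=> *; rewrite ler_pdivrMr; lra. Qed.

Definition aa (R : realType) (n : nat) : R := 1 - (n.+2%:R)^-1.

Lemma aa_ge (R : realType) n : 1/2 <= aa R n.
Proof.
rewrite /aa; have : (n.+2%:R : R)^-1 <= 2^-1.
  by rewrite lef_pV2 ?posrE ?ltr0Sn // ler_nat.
set x := (n.+2%:R : R)^-1; lra.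
Qed.

Lemma aa_lt1 (R : realType) n : aa R n < 1.
Proof. rewrite /aa; have : 0 < (n.+2%:R : R)^-1 by rewrite invr_gt0 ltr0Sn. set x := (n.+2%:R : R)^-1; lra. Qed.

Lemma aa_le (R : realType) m n : (m <= n)%N -> aa R m <= aa R n.
Proof.
move=> mn; rewrite /aa; have : (n.+2%:R : R)^-1 <= (m.+2%:R)^-1.
  by rewrite lef_pV2 ?posrE ?ltr0Sn // ler_nat.
set x := (n.+2%:R : R)^-1; set y := (m.+2%:R : R)^-1; lra.
Qed.

Lemma aa_ltS (R : realType) n : aa R n < aa R n.+1.
Proof.
rewrite /aa; have : (n.+3%:R : R)^-1 < (n.+2%:R)^-1.
  by rewrite ltf_pV2 ?posrE ?ltr0Sn // ltr_nat.
set x := (n.+2%:R : R)^-1; set y := (n.+3%:R : R)^-1; lra.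
Qed.

Lemma aa_mono (R : realType) m n : aa R m < aa R n -> (m < n)%N.
Proof. by move=> H; rewrite ltnNge; apply/negP => /(aa_le R); rewrite leNgt H. Qed.

Lemma num4 (R : realType) (c X Qk y : R) : c * (1/2) <= X -> X < 1/64 + 1/64 ->
  Qk <= 4 * c -> y - 1/64 < Qk -> 1/2 <= y -> False.
Proof. move=> *; lra. Qed.

Lemma num5 (R : realType) (a b z t : R) : a - b <= z -> z < a - t -> t < b.
Proof. move=> *; lra. Qed.

Lemma num6 (R : realType) (a b z e : R) : a - b <= z -> z < e -> a - e < b.
Proof. move=> *; lra. Qed.

Section Fn.
Variables (R : realType) (T : Type) (d : T -> T -> R) (x0 : T).
Hypothesis hd : is_metric d.
Variables (Y : normedModType R) (h : nat -> Y) (H : nat -> seq Y).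
Hypotheses (hh1 : forall n, `|h n| = 1)
  (hh2 : forall n g, spanS (H n) g -> 1/2 <= `|h n - g|)
  (hh3 : forall n, spanS (H n.+1) (h n))
  (hh4 : forall m n g, (m <= n)%N -> spanS (H m) g -> spanS (H n) g).

Local Notation D := (dd d x0).

Definition ff (p : T + nat) : Y := match p with inl _ => 0 | inr n => aa R n *: h n end.
Definition idx (p : T + nat) : nat := match p with inl _ => 0%N | inr n => n end.

Lemma dd_pos p q : p <> q -> 0 < D p q.
Proof.
move=> pq; have [h0 [h1 _]] := dd_metric x0 hd.
rewrite lt_neqAle h0 andbT; apply/eqP => E; apply: pq; apply/h1; by rewrite E.
Qed.

Lemma aa0 n : 0 <= aa R n.
Proof. by apply: le_trans (aa_ge R n); rewrite divr_ge0. Qed.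

Lemma normff n : `|aa R n *: h n| = aa R n.
Proof. by rewrite normrZ hh1 mulr1 ger0_norm // aa0. Qed.

Lemma claim1 p q : p <> q -> `|ff p - ff q| / D p q <= aa R (maxn (idx p) (idx q)).
Proof.
have [h0 _] := dd_metric x0 hd.
case: p => [x|n]; case: q => [y|m] pq /=.
- by rewrite subrr normr0 mul0r aa0.
- by rewrite max0n sub0r normrN normff; apply: num1; [exact: aa0 | case: hd].
- by rewrite maxn0 subr0 normff; apply: num1; [exact: aa0 | case: hd].
- have nm : n != m by apply/eqP => E; apply: pq; rewrite E.
  rewrite (negbTE nm); apply: num2.
  + by apply: le_trans (ler_normB _ _) _; rewrite !normff.
  + exact/aa_le/leq_maxl.
  + exact/aa_le/leq_maxr.
Qed.


Lemma num3 (x c : R) : x <= 1 -> 1/2 <= c -> x <= 4 * `|2^-1 * c|.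
Proof.
move=> x1 c2; rewrite ger0_norm; last by apply: mulr_ge0; [|lra].
lra.
Qed.

Lemma normQ2 n m : `|2^-1 *: (aa R n *: h n - aa R m *: h m)| <= 1.
Proof.
rewrite normrZ ger0_norm // mulrC; apply: num2.
- by apply: le_trans (ler_normB _ _) _; rewrite !normff.
- exact/ltW/aa_lt1.
- exact/ltW/aa_lt1.
Qed.

Lemma claim2 p q : p <> q -> exists (c : R) (w : Y),
  spanS (H (maxn (idx p) (idx q))) w /\
  (D p q)^-1 *: (ff p - ff q) = c *: h (maxn (idx p) (idx q)) + w /\
  `|(D p q)^-1 *: (ff p - ff q)| <= 4 * `|c|.
Proof.
case: p => [x|n]; case: q => [y|m] pq /=.
- exists 0, 0; split; first exact: spanS0.
  rewrite subrr scaler0 scale0r addr0; split => //.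
  by rewrite !normr0 mulr0.
- rewrite max0n; exists (- ((1 + d x0 x)^-1 * aa R m)), 0; split; first exact: spanS0.
  have -> : (1 + d x0 x)^-1 *: (0 - aa R m *: h m) =
     (- ((1 + d x0 x)^-1 * aa R m)) *: h m + 0.
    by rewrite sub0r addr0 scalerN scalerA scaleNr.
  split => //; rewrite addr0 normrZ hh1 mulr1.
  set c := `|_|; have : 0 <= c by apply: normr_ge0.
  lra.
- rewrite maxn0; exists ((1 + d x0 y)^-1 * aa R n), 0; split; first exact: spanS0.
  have -> : (1 + d x0 y)^-1 *: (aa R n *: h n - 0) =
     ((1 + d x0 y)^-1 * aa R n) *: h n + 0.
    by rewrite subr0 addr0 scalerA.
  split => //; rewrite addr0 normrZ hh1 mulr1.
  set c := `|_|; have : 0 <= c by apply: normr_ge0.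
  lra.
- have nm : n != m by apply/eqP => E; apply: pq; rewrite E.
  rewrite (negbTE nm).
  case: (ltngtP n m) => [lt|gt|eq]; last by rewrite eq eqxx in nm.
  +
    exists (- (2^-1 * aa R m)), ((2^-1 * aa R n) *: h n); split.
      by apply: spanSZ; apply: (hh4 lt (hh3 n)).
    split; first by rewrite scalerBr !scalerA scaleNr addrC.
    by rewrite normrN; apply: num3; [exact: normQ2 | exact: aa_ge].
  +
    exists (2^-1 * aa R n), ((- (2^-1 * aa R m)) *: h m); split.
      by apply: spanSZ; apply: (hh4 gt (hh3 m)).
    split; first by rewrite scalerBr !scalerA scaleNr.
    by apply: num3; [exact: normQ2 | exact: aa_ge].
Qed.

Lemma ff_ub : has_ubound (lip_ratios D ff).
Proof.
exists 1 => r [p [q [pq ->]]].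
exact: le_trans (claim1 pq) (ltW (aa_lt1 _ _)).
Qed.

Lemma ff_Lip0 : Lip0 D (inl x0) ff.
Proof. by split => //; exact: ff_ub. Qed.


Lemma ff_not_attain : ~ exists y, attains_norm_toward D ff y.
Proof.
move=> [yv [p [q [pq [Hcv Hnorm]]]]].
pose Q k := (D (p k) (q k))^-1 *: (ff (p k) - ff (q k)).
have aS : forall n, aa R n <= `|yv|.
  move=> n; rewrite Hnorm; apply: (ub_le_sup ff_ub).
  exists (inr n), (inl x0); split => //=.
  have [_ [h1 _]] := hd; rewrite (proj2 (h1 x0 x0) erefl) addr0 divr1.
  by rewrite subr0 normff.
have y12 : 1/2 <= `|yv| := le_trans (aa_ge R 0) (aS 0%N).
have normQ : forall k, `|Q k| = `|ff (p k) - ff (q k)| / D (p k) (q k).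
  move=> k; rewrite /Q normrZ normfV ger0_norm; first by rewrite mulrC.
  exact/ltW/dd_pos.
move/cvgrPdist_lt: Hcv => Hcv.
have e1 : 0 < 1/64 :> R by rewrite divr_gt0.
have [K1 HK1] := near_oo_ex (Hcv _ e1).
pose N := maxn (idx (p K1)) (idx (q K1)).
have e2 : 0 < `|yv| - aa R N.
  by rewrite subr_gt0; apply: lt_le_trans (aa_ltS R N) (aS N.+1).
have [K2 HK2] := near_oo_ex (Hcv _ e2).
pose k := maxn K1 K2.
have Hk1 : `|yv - Q k| < 1/64 := HK1 k (leq_maxl _ _).
have Hk2 : `|yv - Q k| < `|yv| - aa R N := HK2 k (leq_maxr _ _).
have Hl1 : `|yv - Q K1| < 1/64 := HK1 K1 (leqnn _).
pose n := maxn (idx (p k)) (idx (q k)).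
have QkN : aa R N < `|Q k|.
  exact: num5 (lerB_dist yv (Q k)) Hk2.
have Nn : (N < n)%N.
  apply: aa_mono; apply: lt_le_trans QkN _; rewrite normQ; exact: claim1.
have [c [w [Hw [EQk Hc4]]]] := claim2 (pq k).
have [c' [w' [Hw' [EQl _]]]] := claim2 (pq K1).
rewrite -/n in Hw EQk; rewrite -/N in Hw' EQl.
have Qls : spanS (H n) (Q K1).
  rewrite /Q EQl; apply: spanSD.
    by apply: spanSZ; apply: (hh4 Nn (hh3 N)).
  exact: (hh4 (ltnW Nn) Hw').
have lower : `|c| * (1/2) <= `|Q k - Q K1|.
  have -> : Q k - Q K1 = (w - Q K1) + c *: h n.
    by rewrite /Q EQk [c *: _ + _]addrC addrAC.
  apply: (@key_ineq _ _ (H n) (h n) (1/2)); first by rewrite divr_gt0.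
    exact: hh2.
  exact: spanSB.
have upper : `|Q k - Q K1| < 1/64 + 1/64.
  have -> : Q k - Q K1 = (yv - Q K1) - (yv - Q k).
    by rewrite [in RHS]opprB [in RHS]addrC [in RHS]addrA subrK.
  apply: le_lt_trans (ler_normB _ _) _; exact: ltrD.
have Qlow : `|yv| - 1/64 < `|Q k|.
  exact: num6 (lerB_dist yv (Q k)) Hk1.
exact: num4 lower upper Hc4 Qlow y12.
Qed.

End Fn.

Unset Implicit Arguments.

Theorem corollary2p9 (R : realType) (T : Type) (d : T -> T -> R) (x0 : T)
  (Y : completeNormedModType R)
  (hd : is_metric d) (hc : complete_metric d) (hY : infinite_dimensional Y) :
  exists (T' : Type) (d' : T' -> T' -> R) (x0' : T') (j : T -> T'),
    is_metric d' /\ complete_metric d' /\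
    @NA R T' d' x0' Y `<` @Lip0 R T' d' x0' Y /\
    countable (~` range j) /\
    (forall x y, d' (j x) (j y) = d x y) /\ j x0 = x0'.
Proof.
have [h [H [hh1 [hh2 [hh3 hh4]]]]] := riesz_seq hY.
exists (T + nat)%type, (dd d x0), (inl x0), inl.
split; first exact: dd_metric.
split; first exact: dd_complete.
split.
  split; first by move=> f [].
  move=> Hsub; have [_ Hna] := Hsub _ (ff_Lip0 x0 hd hh1).
  exact: (ff_not_attain hd hh1 hh2 hh3 hh4 Hna).
split; last by [].
apply: (card_le_trans (subset_card_le _) (card_image_le inr setT)).
case=> [x|n] Hn; first by exfalso; apply: Hn; exists x.
by exists n.
Qed.
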